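(* Let $\mathcal{M}=(\mathcal{S},\mathcal{A},P,r,\gamma,\mu)$ be an MDP with finite state and action spaces, $\gamma\in[0,1)$ and initial state-action distribution $\mu$, and let $\pi$ be a fixed stationary policy. For a state-action pair $(s,a)$ and $k\in\mathbb{N}$, let $p_k(s,a)$ be the probability that $(s_k,a_k)=(s,a)$ when $(s_0,a_0)\sim d^\pi$ and the process evolves by $s_{j+1}\sim P(\cdot|s_j,a_j)$, $a_{j+1}\sim\pi(\cdot|s_{j+1})$. Then for every $k\in\mathbb{N}$ and every $(s,a)$ with $\mu(s,a)>0$, \[\frac{p_k(s,a)}{d^\pi(s,a)}\le\frac{1}{(1-\gamma)\mu(s,a)}.\]
   Context: $d^\pi(s,a)=(1-\gamma)\sum_{t\ge0}\gamma^t\mathbb{P}(s_t=s,a_t=a;\pi,\mu)$, where $(s_0,a_0)\sim\mu$ and subsequent states and actions follow $P$ and $\pi$. *)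

(* Defs.v *)
From HB Require Import structures.
From mathcomp Require Import all_boot all_order all_algebra.
From mathcomp Require Import all_classical all_reals all_analysis.
Set Implicit Arguments. Unset Strict Implicit. Unset Printing Implicit Defensive.
Import Order.TTheory GRing.Theory Num.Theory.
Local Open Scope ring_scope.

(* A finite MDP: states S, actions A (finTypes), transition kernel
   P s a s' = P(s'|s,a), stationary policy pi s a = pi(a|s),
   state-action distributions as functions S -> A -> R. *)

Definition is_distr (R : realType) (T : finType) (p : T -> R) : Prop :=
  (forall x, 0 <= p x) /\ \sum_(x : T) p x = 1.

Definition is_distr2 (R : realType) (S A : finType) (q : S -> A -> R) : Prop :=
  (forall s a, 0 <= q s a) /\ \sum_(s : S) \sum_(a : A) q s a = 1.

Definition sa_step (R : realType) (S A : finType)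
  (P : S -> A -> S -> R) (pi : S -> A -> R) (q : S -> A -> R) : S -> A -> R :=
  fun s' a' => \sum_(s : S) \sum_(a : A) q s a * P s a s' * pi s' a'.

Definition sa_law (R : realType) (S A : finType)
  (P : S -> A -> S -> R) (pi : S -> A -> R) (q0 : S -> A -> R) (t : nat)
  : S -> A -> R := iter t (sa_step P pi) q0.

Definition occupancy (R : realType) (S A : finType)
  (P : S -> A -> S -> R) (pi : S -> A -> R) (gamma : R) (mu : S -> A -> R)
  : S -> A -> R :=
  fun s a => (1 - gamma) *
    limn (fun n => \sum_(0 <= t < n) gamma ^+ t * sa_law P pi mu t s a).

(* Main.v *)
Require Import Defs.
From HB Require Import structures.
From mathcomp Require Import all_boot all_order all_algebra.
From mathcomp Require Import all_classical all_reals all_analysis.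
From mathcomp Require Import ring lra.
Import Order.TTheory GRing.Theory Num.Theory.
Import numFieldTopology.Exports numFieldNormedType.Exports.
Local Open Scope ring_scope.
Local Open Scope classical_set_scope.
Set Implicit Arguments.

Lemma step_nonneg (R : realType) (S A : finType)
  (P : S -> A -> S -> R) (pi : S -> A -> R) (q : S -> A -> R) :
  (forall s a, is_distr (P s a)) -> (forall s, is_distr (pi s)) ->
  (forall s a, 0 <= q s a) -> forall s a, 0 <= sa_step P pi q s a.
Proof.
move=> HP Hpi Hq s' a'; rewrite /sa_step.
apply: sumr_ge0 => s _; apply: sumr_ge0 => a _.
by rewrite !mulr_ge0 //; [case: (HP s a) | case: (Hpi s')].
Qed.

Lemma step_mass (R : realType) (S A : finType)
  (P : S -> A -> S -> R) (pi : S -> A -> R) (q : S -> A -> R) :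
  (forall s a, is_distr (P s a)) -> (forall s, is_distr (pi s)) ->
  \sum_s \sum_a sa_step P pi q s a = \sum_s \sum_a q s a.
Proof.
move=> HP Hpi; rewrite /sa_step.
under eq_bigr => s' _ do rewrite exchange_big /=.
rewrite exchange_big /=.
under eq_bigr => s _ do (under eq_bigr => s' _ do rewrite exchange_big /=).
under eq_bigr => s _ do rewrite exchange_big /=.
apply: eq_bigr => s _; apply: eq_bigr => a _.
under eq_bigr => s' _ do rewrite -mulr_sumr (proj2 (Hpi s')) mulr1.
by rewrite -mulr_sumr (proj2 (HP s a)) mulr1.
Qed.

Lemma law_prop (R : realType) (S A : finType)
  (P : S -> A -> S -> R) (pi : S -> A -> R) (q : S -> A -> R) :
  (forall s a, is_distr (P s a)) -> (forall s, is_distr (pi s)) ->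
  (forall s a, 0 <= q s a) -> forall t,
  (forall s a, 0 <= sa_law P pi q t s a) /\
  \sum_s \sum_a sa_law P pi q t s a = \sum_s \sum_a q s a.
Proof.
move=> HP Hpi Hq; elim=> [|t [IH1 IH2]] //=.
rewrite /sa_law /= -/(sa_law P pi q t); split.
  exact: step_nonneg.
by rewrite step_mass.
Qed.

Lemma le_mass (R : realType) (S A : finType) (q : S -> A -> R) s a :
  (forall s a, 0 <= q s a) -> q s a <= \sum_s \sum_a q s a.
Proof.
move=> Hq; rewrite (bigD1 s) //= (bigD1 a) //= -addrA lerDl.
apply: addr_ge0; first by apply: sumr_ge0.
by apply: sumr_ge0 => ? _; apply: sumr_ge0.
Qed.

Lemma cvg_bigsum (R : realType) (I : Type) (r : seq I) (f : I -> nat -> R) :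
  (forall i, cvgn (f i)) ->
  (fun n => \sum_(i <- r) f i n) @ \oo --> \sum_(i <- r) limn (f i).
Proof.
move=> H; elim: r => [|i r IH].
  under eq_fun do rewrite big_nil. rewrite big_nil; exact: cvg_cst.
under eq_fun do rewrite big_cons. rewrite big_cons.
by apply: cvgD => //; apply: H.
Qed.

Lemma geom_sum (R : realType) (g : R) n :
  (\sum_(0 <= t < n) g ^+ t) * (1 - g) = 1 - g ^+ n.
Proof.
elim: n => [|n IH]; first by rewrite big_geq // mul0r expr0 subrr.
by rewrite big_nat_recr //= mulrDl IH exprS; ring.
Qed.

Unset Implicit Arguments.

Theorem lemma3 (R : realType) (S A : finType)
  (P : S -> A -> S -> R) (pi : S -> A -> R) (gamma : R) (mu : S -> A -> R) :
  (forall s a, is_distr (P s a)) ->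
  (forall s, is_distr (pi s)) ->
  is_distr2 mu ->
  0 <= gamma -> gamma < 1 ->
  forall (k : nat) (s : S) (a : A), 0 < mu s a ->
    sa_law P pi (occupancy P pi gamma mu) k s a / occupancy P pi gamma mu s a
    <= 1 / ((1 - gamma) * mu s a).
Proof.
move=> HP Hpi [Hmu0 Hmu1] g0 g1 k s a mupos.
have g1' : 0 < 1 - gamma by rewrite subr_gt0.
pose u t := sa_law P pi mu t.
have u0 : forall t s a, 0 <= u t s a by move=> t; case: (@law_prop _ _ _ P pi mu HP Hpi Hmu0 t).
have umass : forall t, \sum_s \sum_a u t s a = 1.
  by move=> t; case: (@law_prop _ _ _ P pi mu HP Hpi Hmu0 t) => _ ->.
have u1 : forall t s a, u t s a <= 1.
  by move=> t s' a'; rewrite -(umass t); apply: le_mass.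
pose Sn s a n := \sum_(0 <= t < n) gamma ^+ t * u t s a.
have Gb : forall n, \sum_(0 <= t < n) gamma ^+ t <= (1 - gamma)^-1.
  move=> n; rewrite -[X in _ <= X]mul1r ler_pdivlMr // geom_sum lerBlDr lerDl.
  exact: exprn_ge0.
have Sinc : forall s a, {homo Sn s a : n m / (n <= m)%N >-> n <= m}.
  move=> s' a'; apply/nondecreasing_seqP => n.
  rewrite /Sn big_nat_recr //= lerDl.
  by apply: mulr_ge0; [exact: exprn_ge0|exact: u0].
have Sle : forall s a n, Sn s a n <= (1 - gamma)^-1.
  move=> s' a' n; apply: le_trans (Gb n).
  apply: ler_sum => t _; rewrite -[X in _ <= X]mulr1.
  by apply: ler_wpM2l; [exact: exprn_ge0|exact: u1].
have Scvg : forall s a, cvgn (Sn s a).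
  move=> s' a'; apply/cvg_ex; exists (sup (range (Sn s' a'))).
  apply: nondecreasing_cvgn => //.
  by exists (1 - gamma)^-1 => _ [n _ <-].
have Sge : forall s a, mu s a <= limn (Sn s a).
  move=> s' a'; have := nondecreasing_cvgn_le (Sinc s' a') (Scvg s' a') 1.
  by rewrite /Sn big_nat1 expr0 mul1r.
have dE : forall s a, occupancy P pi gamma mu s a = (1 - gamma) * limn (Sn s a).
  by [].
have d0 : forall s a, 0 <= occupancy P pi gamma mu s a.
  move=> s' a'; rewrite dE; apply: mulr_ge0; first exact: ltW.
  exact: le_trans (Hmu0 s' a') (Sge s' a').
have dmass : \sum_s \sum_a occupancy P pi gamma mu s a <= 1.
  under eq_bigr do under eq_bigr do rewrite dE.
  under eq_bigr do rewrite -mulr_sumr.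
  rewrite -mulr_sumr -ler_pdivlMl // mulr1.
  have Hc : (fun n => \sum_s \sum_a Sn s a n) @ \oo -->
             \sum_s \sum_a limn (Sn s a).
    have -> : \sum_s \sum_a limn (Sn s a) =
              \sum_s limn (fun n => \sum_a Sn s a n).
      apply: eq_bigr => s' _; apply/esym/cvg_lim => //.
      exact: cvg_bigsum.
    apply: cvg_bigsum => s'; apply/cvg_ex; eexists; exact: cvg_bigsum.
  rewrite -(cvg_lim _ Hc) //; apply: limr_le; first by apply/cvg_ex; eexists; exact: Hc.
  near=> n; apply: le_trans (Gb n).
  rewrite /Sn; under eq_bigr do rewrite exchange_big /=.
  rewrite exchange_big /=; apply: ler_sum => t _.
  rewrite -[X in _ <= X]mulr1 -(umass t) mulr_sumr; apply: ler_sum => s' _.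
  by rewrite mulr_sumr.
have dpos : (1 - gamma) * mu s a <= occupancy P pi gamma mu s a.
  by rewrite dE; apply: ler_wpM2l; [exact: ltW|exact: Sge].
have mpos : 0 < (1 - gamma) * mu s a by apply: mulr_gt0.
have dgt0 : 0 < occupancy P pi gamma mu s a by apply: lt_le_trans dpos.
have pk1 : sa_law P pi (occupancy P pi gamma mu) k s a <= 1.
  case: (@law_prop _ _ _ P pi _ HP Hpi d0 k) => H0 H1.
  have Hm := @le_mass _ _ _ _ s a H0; apply: le_trans Hm _; rewrite H1; exact: dmass.
apply: (@le_trans _ _ (1 / occupancy P pi gamma mu s a)).
  rewrite mul1r -[X in _ <= X]mul1r; apply: ler_wpM2r => //; by rewrite invr_ge0 ltW.
rewrite !mul1r lef_pV2 // posrE //.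
Unshelve. all: by end_near.
Qed.
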